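(* Let $X\subseteq\Omega$ be club in $\Omega$ with $0\notin X$, $\Theta=\Theta_X$. Let $\alpha=\Omega\tilde\alpha>0$ (a nonzero multiple of $\Omega$) and $\beta<\Omega$ be such that $\alpha+\beta\in\hat\varepsilon_{\Omega+1}\cap\mathrm{JUMP}(X)$, and assume $\tau(\alpha)=\Omega$. Define $\theta_0=\Theta^*(\alpha+\beta)$ and $\theta_{n+1}=\Theta(\alpha[\theta_n])$. Then $(\theta_n)_{n<\omega}$ is strictly increasing with supremum $\Theta(\alpha+\beta)$.
   Context: $\Omega$ is the first uncountable ordinal; $\varepsilon_{\Omega+1}$ the least $\varepsilon>\Omega$ with $\omega^\varepsilon=\varepsilon$. Every $0<\xi<\varepsilon_{\Omega+1}$ has a unique $\Omega$-normal form $\xi=\Omega^{\alpha}\beta+\gamma$ with $0<\beta<\Omega$, $\gamma<\Omega^{\alpha}$. $C(0)=\{0\}$, $C(\Omega^\alpha\beta+\gamma)=C(\alpha)\cup C(\gamma)\cup\{\beta\}$; $\xi^*=\max C(\xi)$. For $\theta<\Omega$: $0[\theta]=1[\theta]=0$; $(\Omega^\alpha\beta+\gamma)[\theta]=\Omega^\alpha\beta+\gamma[\theta]$ if $\gamma>0$; $(\Omega^\alpha\beta)[\theta]=\Omega^\alpha\theta$ if $\beta$ is a limit; $\Omega^{\alpha+1}[\theta]=\Omega^\alpha\theta$; $(\Omega^\alpha(\beta+1))[\theta]=\Omega^\alpha\beta+(\Omega^\alpha)[\theta]$ if $\beta>0$; $\Omega^\alpha[\theta]=\Omega^{\alpha[\theta]}$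 if $\alpha$ is a limit. $\tau(0)=0$, $\tau(\zeta+1)=1$, $\tau(\Omega^\alpha\beta+\gamma)=\tau(\gamma)$ if $\gamma>0$, $\tau(\Omega^\alpha\beta)=\beta$ if $\beta$ limit, $\tau(\Omega^\alpha(\beta+1))=\tau(\alpha)$ if $\alpha$ limit, $\tau(\Omega^{\alpha+1}(\beta+1))=\Omega$. $\Theta_X(\xi)$ is the least $\theta\in X$ with $\theta>\xi^*$ such that all $\zeta<\xi$ with $\zeta^*<\theta$ have $\Theta_X(\zeta)<\theta$. $\Omega_0=1$, $\Omega_{n+1}=\Omega^{\Omega_n}$, $\Theta_X(\varepsilon_{\Omega+1})=\sup_n\Theta_X(\Omega_n)$, $\hat\varepsilon_{\Omega+1}=\{\xi<\varepsilon_{\Omega+1}:\xi^*<\Theta_X(\varepsilon_{\Omega+1})\}$. $\mathrm{FIX}(X)$ is the set of $\xi$ with $(\xi[1])^*<\xi^*=\tau(\xi)=\Theta_X(\gamma)$ for some $\gamma>\xi$; $\mathrm{JUMP}(X)=\{0\}\cup\{\text{successors}\}\cup\mathrm{FIX}(X)$; $\Theta^*(\xi)=\Theta_X(\zeta)$ if $\xi=\zeta+1$, $\tau(\xi)$ if $\xi\in\mathrm{FIX}(X)$, and $0$ otherwise. *)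

(* Defs.v *)
(* classical. Ordinals below epsilon_{Omega+1} are represented by
   Omega-normal-form terms over an abstract model of Omega = omega_1. *)
From Stdlib Require Import Classical ClassicalEpsilon Arith List.
Set Implicit Arguments.

(* A model of the first uncountable ordinal Omega: a strict well-order, total,
   uncountable, all of whose proper initial segments are countable.
   (This determines Omega up to isomorphism.) *)
Record Omega1 := mkOmega1 {
  ord :> Type;
  olt : ord -> ord -> Prop;
  ozero : ord;
  olt_trans : forall x y z, olt x y -> olt y z -> olt x z;
  olt_irrefl : forall x, ~ olt x x;
  olt_total : forall x y, olt x y \/ x = y \/ olt y x;
  olt_wf : well_founded olt;
  ozero_least : forall x, ~ olt x ozero;
  segments_countable : forall x, exists f : ord -> nat,
      forall y z, olt y x -> olt z x -> f y = f z -> y = z;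
  ord_uncountable : ~ exists f : ord -> nat, forall y z, f y = f z -> y = z
}.

(* Terms  TP a b g  stand for  Omega^a * b + g. *)
Inductive tm (A : Type) : Type :=
| TZ : tm A
| TP : tm A -> A -> tm A -> tm A.
Arguments TZ {A}.

Definition dec (P : Prop) : bool :=
  if excluded_middle_informative P then true else false.

Section Defs.
Context {W : Omega1}.
Local Notation O := (ord W).
Local Notation "x <o y" := (olt W x y) (at level 70).
Local Notation o0 := (ozero W).

Definition ole (x y : O) := x <o y \/ x = y.
Definition is_succ_of (x y : O) := x <o y /\ forall z, x <o z -> ole y z.
Definition osucc (x : O) : O := epsilon (inhabits o0) (is_succ_of x).
Definition osuccessor (y : O) := exists x, is_succ_of x y.
Definition opred (y : O) : O := epsilon (inhabits o0) (fun x => is_succ_of x y).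
Definition olimit (y : O) := y <> o0 /\ ~ osuccessor y.
Definition oone : O := osucc o0.
Definition ofinite (n : O) := forall m, ole m n -> m = o0 \/ osuccessor m.
Definition omax (x y : O) : O := if dec (x <o y) then y else x.

Fixpoint tlt (x y : tm O) : Prop :=
  match x, y with
  | TZ, TZ => False
  | TZ, TP _ _ _ => True
  | TP _ _ _, TZ => False
  | TP a b g, TP a' b' g' =>
      tlt a a' \/ (a = a' /\ (b <o b' \/ (b = b' /\ tlt g g')))
  end.

(* g < Omega^a, for g in normal form *)
Definition below_pow (a g : tm O) : Prop :=
  match g with TZ => True | TP a' _ _ => tlt a' a end.

Fixpoint nf (x : tm O) : Prop :=
  match x with
  | TZ => True
  | TP a b g => nf a /\ b <> o0 /\ nf g /\ below_pow a g
  end.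

Fixpoint Cset (x : tm O) : list O :=
  match x with
  | TZ => o0 :: nil
  | TP a b g => Cset a ++ Cset g ++ b :: nil
  end.
Definition star (x : tm O) : O := fold_right omax o0 (Cset x).

Definition emb (b : O) : tm O := if dec (b = o0) then TZ else TP TZ b TZ.
Definition tone : tm O := TP TZ oone TZ.
Definition tOmega : tm O := TP tone oone TZ.
Definition toO (x : tm O) : O :=
  match x with TP TZ b TZ => b | _ => o0 end.

Fixpoint tsucc (x : tm O) : tm O :=
  match x with
  | TZ => tone
  | TP a b TZ => if dec (a = TZ) then TP TZ (osucc b) TZ else TP a b tone
  | TP a b g => TP a b (tsucc g)
  end.
Definition tsuccessor (x : tm O) := exists z, nf z /\ x = tsucc z.
Definition tlimit (x : tm O) := x <> TZ /\ ~ tsuccessor x.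
Definition tpred (x : tm O) : tm O :=
  epsilon (inhabits TZ) (fun z => nf z /\ x = tsucc z).

Fixpoint tau (x : tm O) : tm O :=
  match x with
  | TZ => TZ
  | TP a b g =>
    match g with
    | TP _ _ _ => tau g
    | TZ =>
      if dec (tsuccessor x) then tone
      else if dec (olimit b) then emb b
      else if dec (tlimit a) then tau a               (* tau(Omega^a (b+1)) = tau(a) *)
      else tOmega                                     (* tau(Omega^(a+1)(b+1)) = Omega *)
    end
  end.

Definition mon (a : tm O) (t : O) : tm O :=
  if dec (t = o0) then TZ else TP a t TZ.

Fixpoint fs (x : tm O) (t : O) : tm O :=
  match x with
  | TZ => TZ
  | TP a b g =>
    match g with
    | TP _ _ _ => TP a b (fs g t)
    | TZ =>
      let pw :=  (* Omega^a [t] *)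
        if dec (a = TZ) then TZ
        else if dec (tsuccessor a) then mon (tpred a) t
        else TP (fs a t) oone TZ in                      (* Omega^a[t] = Omega^(a[t]) *)
      if dec (olimit b) then mon a t
      else if dec (opred b = o0) then pw
      else TP a (opred b) pw                             (* Omega^a b' + Omega^a[t] *)
    end
  end.

Fixpoint Omn (n : nat) : tm O :=
  match n with 0 => tone | S m => TP (Omn m) oone TZ end.

(* Omega * x, computed termwise: Omega * (sum Omega^a_i b_i) = sum Omega^(1+a_i) b_i *)
Definition one_plus (e : tm O) : tm O :=
  match e with
  | TZ => tone
  | TP TZ n TZ => if dec (ofinite n) then TP TZ (osucc n) TZ else e
  | _ => e
  end.
Fixpoint tOmul (x : tm O) : tm O :=
  match x with TZ => TZ | TP a b g => TP (one_plus a) b (tOmul g) end.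

(* x + b for b < Omega, where x is a multiple of Omega (last exponent > 0):
   the Omega-normal form is obtained by appending the term b. *)
Fixpoint tadd_small (x : tm O) (b : O) : tm O :=
  match x with TZ => emb b | TP a c g => TP a c (tadd_small g b) end.

Definition club (X : O -> Prop) :=
  (forall z, exists x, X x /\ z <o x) /\
  (forall y, olimit y ->
     (forall z, z <o y -> exists x, X x /\ z <o x /\ x <o y) -> X y).

Definition Theta_cond (X : O -> Prop) (Th : tm O -> O) (xi : tm O) (th : O) :=
  X th /\ star xi <o th /\
  (forall z, nf z -> tlt z xi -> star z <o th -> Th z <o th).
Definition is_Theta (X : O -> Prop) (Th : tm O -> O) :=
  forall xi, nf xi ->
    Theta_cond X Th xi (Th xi) /\
    (forall th, Theta_cond X Th xi th -> ole (Th xi) th).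

(* xi in hat-epsilon_{Omega+1}: xi^* < Theta(eps_{Omega+1}) = sup_n Theta(Omega_n) *)
Definition epshat (Th : tm O -> O) (xi : tm O) :=
  nf xi /\ exists n, star xi <o Th (Omn n).

Definition FIX (Th : tm O -> O) (xi : tm O) :=
  nf xi /\ star (fs xi oone) <o star xi /\ emb (star xi) = tau xi /\
  exists g, nf g /\ tlt xi g /\ tau xi = emb (Th g).

Definition JUMP (Th : tm O -> O) (xi : tm O) :=
  xi = TZ \/ tsuccessor xi \/ FIX Th xi.

Definition ThetaStar (Th : tm O -> O) (xi : tm O) : O :=
  if dec (tsuccessor xi) then Th (tpred xi)
  else if dec (FIX Th xi) then toO (tau xi)
  else o0.

Fixpoint theta_seq (Th : tm O -> O) (alpha : tm O) (beta : O) (n : nat) : O :=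
  match n with
  | 0 => ThetaStar Th (tadd_small alpha beta)
  | S m => Th (fs alpha (theta_seq Th alpha beta m))
  end.

End Defs.

(* Main.v *)
Require Import Defs.
From Stdlib Require Import Classical ClassicalEpsilon Arith List.

Lemma dec_case (P : Prop) : (P /\ dec P = true) \/ (~P /\ dec P = false).
Proof. unfold dec; destruct (excluded_middle_informative P); auto. Qed.

Ltac cdec P := let H := fresh "D" in let E := fresh "E" in
  destruct (dec_case P) as [[H E]|[H E]]; rewrite ?E in *.

Section S.
Context {W : Omega1}.
Local Notation O := (ord W).
Local Notation "x <o y" := (olt W x y) (at level 70).
Local Notation o0 := (ozero W).

Lemma lt_trans (x y z : O) : x <o y -> y <o z -> x <o z.
Proof. apply olt_trans. Qed.
Lemma lt_irr (x : O) : ~ x <o x.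
Proof. apply olt_irrefl. Qed.
Lemma ole_lt (x y z : O) : ole x y -> y <o z -> x <o z.
Proof. intros [H| ->] H2; [eapply lt_trans; eauto | auto]. Qed.
Lemma lt_ole (x y z : O) : x <o y -> ole y z -> x <o z.
Proof. intros H [H2| <-]; [eapply lt_trans; eauto | auto]. Qed.
Lemma nlt_ole (x y : O) : ~ x <o y -> ole y x.
Proof. intros H. destruct (olt_total W x y) as [h|[h|h]]; [tauto| right; auto | left; auto]. Qed.
Lemma ole0 (x : O) : ole o0 x.
Proof. apply nlt_ole, ozero_least. Qed.
Lemma lt_nz (x y : O) : x <o y -> y <> o0.
Proof. intros H ->. eapply ozero_least; eauto. Qed.

Lemma exists_min (P : O -> Prop) : (exists x, P x) -> exists m, P m /\ forall z, P z -> ~ z <o m.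
Proof.
  intros [x Hx]. apply NNPP; intro Hn.
  assert (forall y, ~ P y) as Hall.
  { intro y. induction y as [y IH] using (well_founded_ind (olt_wf W)).
    intro Py. apply Hn. exists y. split; auto. intros z Pz Hz. exact (IH z Hz Pz). }
  exact (Hall x Hx).
Qed.

Lemma succ_exists (x : O) : exists y, x <o y.
Proof.
  apply NNPP; intro Hn.
  destruct (segments_countable W x) as [f Hf].
  apply (ord_uncountable W).
  exists (fun y => if dec (y = x) then 0 else S (f y)).
  intros y z. cdec (y = x); cdec (z = x); intros E1; try congruence.
  injection E1; intro E2. apply Hf; auto.
  - destruct (olt_total W y x) as [h|[h|h]]; auto; [tauto| exfalso; apply Hn; eauto].
  - destruct (olt_total W z x) as [h|[h|h]]; auto; [tauto| exfalso; apply Hn; eauto].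
Qed.

Lemma osucc_spec (x : O) : is_succ_of x (osucc x).
Proof.
  unfold osucc. apply epsilon_spec.
  destruct (exists_min (fun y => x <o y) (succ_exists x)) as [m [H1 H2]].
  exists m. split; auto. intros z Hz. apply nlt_ole. intro. eapply H2; eauto.
Qed.

Lemma succ_uniq (x y z : O) : is_succ_of x y -> is_succ_of x z -> y = z.
Proof.
  intros [H1 H2] [H3 H4]. destruct (H2 z H3) as [h|h]; auto.
  destruct (H4 y H1) as [h'|h']; auto. exfalso; eapply lt_irr; eapply lt_trans; eauto.
Qed.

Lemma pred_le (p b x : O) : is_succ_of p b -> x <o b -> ole x p.
Proof.
  intros [H1 H2] Hx. apply nlt_ole. intro Hp. specialize (H2 x Hp).
  exact (lt_irr _ (lt_ole _ _ _ Hx H2)).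
Qed.

Lemma lt_succ (x : O) : x <o osucc x.
Proof. apply osucc_spec. Qed.

Lemma one_nz : (oone : O) <> o0.
Proof. unfold oone. eapply lt_nz, lt_succ. Qed.

Lemma one_le (b : O) : b <> o0 -> ole oone b.
Proof.
  intro H. destruct (osucc_spec o0) as [_ H2]. apply H2.
  destruct (olt_total W o0 b) as [h|[h|h]]; auto; [congruence | exfalso; eapply ozero_least; eauto].
Qed.

Lemma opred_spec (b : O) : b <> o0 -> ~ olimit b -> is_succ_of (opred b) b.
Proof.
  intros H1 H2. unfold opred. apply epsilon_spec.
  apply NNPP; intro H3. apply H2. split; auto.
Qed.


Lemma tlt_TZ_r (x : tm O) : ~ tlt x TZ.
Proof. destruct x; simpl; auto. Qed.

Lemma tlt_trans (x y z : tm O) : tlt x y -> tlt y z -> tlt x z.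
Proof.
  revert y z. induction x as [|a IHa b g IHg]; intros y z H1 H2;
  destruct y as [|a' b' g']; destruct z as [|a'' b'' g'']; simpl in *; auto; try tauto.
  destruct H1 as [H1|[E1 [H1|[E1' H1]]]]; destruct H2 as [H2|[E2 [H2|[E2' H2]]]]; subst;
  first [ left; eauto; fail | right; split; [reflexivity|]; first [left; eapply lt_trans; eauto; fail | left; eauto; fail | right; split; eauto] ].
Qed.

Definition allb (th : O) (x : tm O) := Forall (fun c => c <o th) (Cset x).

Lemma In_o0 (x : tm O) : In o0 (Cset x).
Proof. induction x; simpl; auto. apply in_or_app; auto. Qed.

Lemma allb_o0 th (x : tm O) : allb th x -> o0 <o th.
Proof. intro H. unfold allb in H. rewrite Forall_forall in H. apply H, In_o0. Qed.

Lemma omax_lt (x y th : O) : omax x y <o th <-> x <o th /\ y <o th.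
Proof.
  unfold omax. cdec (x <o y); split; intros H; try tauto.
  - split; auto. eapply lt_trans; eauto.
  - split; auto. apply nlt_ole in D. eapply ole_lt; eauto.
Qed.

Lemma fold_lt (l : list O) th : fold_right omax o0 l <o th <-> o0 <o th /\ Forall (fun c => c <o th) l.
Proof.
  induction l; simpl. { split; intros; try tauto. split; auto. }
  rewrite omax_lt, IHl, Forall_cons_iff. tauto.
Qed.

Lemma star_allb (x : tm O) th : star x <o th <-> allb th x.
Proof.
  unfold star, allb. rewrite fold_lt. split; [tauto|]. intro H; split; auto.
  eapply allb_o0; eauto.
Qed.

Lemma le_star (x : tm O) c : In c (Cset x) -> ole c (star x).
Proof.
  intro H. apply nlt_ole. intro H2. apply star_allb in H2. unfold allb in H2.
  rewrite Forall_forall in H2. exact (lt_irr _ (H2 c H)).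
Qed.

Lemma allb_mono (x : tm O) th th' : allb th x -> ole th th' -> allb th' x.
Proof.
  unfold allb. intros H1 H2. eapply Forall_impl; [|exact H1]. intros c Hc. exact (lt_ole _ _ _ Hc H2).
Qed.

Lemma allb_TP th (a g : tm O) b : allb th (TP a b g) <-> allb th a /\ allb th g /\ b <o th.
Proof. unfold allb; simpl. rewrite !Forall_app, Forall_cons_iff. split; intuition. Qed.

Lemma allb_TZ th : allb th (@TZ O) <-> o0 <o th.
Proof. unfold allb; simpl. rewrite Forall_cons_iff. split; intuition. Qed.

Lemma tsucc_nz (y : tm O) : tsucc y <> TZ.
Proof. destruct y as [|a b g]; simpl; [discriminate|]. destruct g; [cdec (a = TZ)|]; discriminate. Qed.

Lemma lt_tsucc (y : tm O) : tlt y (tsucc y).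
Proof.
  induction y as [|a IHa b g IHg]; simpl; auto.
  destruct g as [|a2 b2 g2].
  - cdec (a = TZ); simpl.
    + subst. right; split; auto. left; apply lt_succ.
    + right; split; auto.
  - right; split; auto.
Qed.

Lemma tone_le (x : tm O) : nf x -> tlt x tone -> x = TZ.
Proof.
  destruct x as [|a b g]; auto. simpl. intros [Ha [Hb [Hg Hbp]]] H.
  destruct H as [H|[-> [H|[-> H]]]]; [destruct a; simpl in H; tauto| |destruct g; simpl in H; tauto].
  exfalso. apply Hb. destruct (pred_le _ _ _ (osucc_spec o0) H) as [h|h]; auto.
  exfalso; eapply ozero_least; eauto.
Qed.

Lemma tsucc_le (x y : tm O) : nf x -> tlt x (tsucc y) -> x = y \/ tlt x y.
Proof.
  revert x. induction y as [|a IHa b g IHg]; intros x Hx H.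
  - simpl in H. left. apply tone_le; auto.
  - destruct x as [|a' b' g']; [right; simpl; auto|].
    destruct Hx as [Ha' [Hb' [Hg' Hbp']]]. simpl in H.
    destruct g as [|a2 b2 g2].
    + cdec (a = TZ); simpl in H.
      * subst. destruct H as [H|[-> [H|[-> H]]]]; [destruct a'; simpl in H; tauto| |destruct g'; simpl in H; tauto].
        destruct (pred_le _ _ _ (osucc_spec b) H) as [h|h].
        -- right; simpl; auto.
        -- subst. left. destruct g'; auto. simpl in Hbp'. destruct g'1; simpl in Hbp'; tauto.
      * destruct H as [H|[-> [H|[-> H]]]]; [right; simpl; auto|right; simpl; auto|].
        left. rewrite (tone_le g'); auto.
    + destruct H as [H|[-> [H|[-> H]]]]; [right; simpl; auto|right; simpl; auto|].
      destruct (IHg g' Hg' H) as [h|h]; [left; subst; auto|right; simpl; auto].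
Qed.

Lemma allb_tsucc th (z : tm O) : allb th (tsucc z) -> allb th z.
Proof.
  induction z as [|a IHa b g IHg]; simpl; intro H.
  - apply allb_TZ. unfold tone in H. apply allb_TP in H. apply allb_TZ; tauto.
  - destruct g as [|a2 b2 g2].
    + cdec (a = TZ).
      * subst. apply allb_TP in H. apply allb_TP. split; [tauto|split;[tauto|]].
        eapply lt_trans; [apply lt_succ|tauto].
      * apply allb_TP in H. apply allb_TP. split; [tauto|split;[|tauto]]. apply allb_TZ.
        eapply allb_o0; apply H.
    + apply allb_TP in H. apply allb_TP. intuition.
Qed.

Lemma tpred_spec (a : tm O) : tsuccessor a -> nf (tpred a) /\ a = tsucc (tpred a).
Proof. intro H. unfold tpred. apply epsilon_spec. exact H. Qed.


Lemma tOmega_ne_emb (b : O) : emb b <> tOmega.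
Proof. unfold emb. cdec (b = o0); [discriminate|]. intro EE; injection EE; intros; discriminate. Qed.
Lemma tOmega_ne_tone : (tone : tm O) <> tOmega.
Proof. intro E; injection E; intros; discriminate. Qed.

Lemma LE (b : O) : b <> o0 -> tau (TP TZ b TZ) <> tOmega.
Proof.
  intros Hb. simpl. cdec (tsuccessor (TP TZ b (@TZ O))); [apply tOmega_ne_tone|].
  cdec (olimit b); [apply tOmega_ne_emb|].
  cdec (tlimit (@TZ O)); [destruct D1; congruence|].
  exfalso. apply D. assert (osuccessor b) as [p Hp].
  { apply NNPP; intro H. apply D0. split; auto. }
  cdec (p = o0).
  - subst. exists TZ. split; simpl; auto. unfold tone. f_equal. f_equal.
    apply (succ_uniq o0); auto. apply osucc_spec.
  - exists (TP TZ p TZ). split; [simpl; auto|]. simpl. cdec (@TZ O = TZ); [|congruence].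
    f_equal. apply (succ_uniq p); auto. apply osucc_spec.
Qed.

Lemma tau_last (a : tm O) b : nf (TP a b TZ) -> tau (TP a b TZ) = tOmega ->
  ~ olimit b /\ a <> TZ /\ (tsuccessor a \/ (tlimit a /\ tau a = tOmega)).
Proof.
  intros Hn Ht. assert (a <> TZ) as Ha.
  { intro; subst. apply (LE b); auto. apply Hn. }
  revert Ht. simpl. cdec (tsuccessor (TP a b (@TZ O))); [intro Ht; exfalso; apply tOmega_ne_tone; auto|].
  cdec (olimit b); [intro Ht; exfalso; eapply tOmega_ne_emb; eauto|].
  cdec (tlimit a); intro Ht.
  - split; auto.
  - split; auto. split; auto. left. apply NNPP; intro H. apply D1. split; auto.
Qed.

Lemma tadd0 (x : tm O) : tadd_small x o0 = x.
Proof. induction x; simpl; [unfold emb; cdec (o0 = o0); congruence | congruence]. Qed.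

Lemma tadd_lt (x : tm O) g b : g <o b -> tlt (tadd_small x g) (tadd_small x b).
Proof.
  intro H. induction x as [|a _ c y IH]; simpl.
  - unfold emb. cdec (g = o0); cdec (b = o0); simpl; auto.
    + subst. exfalso; eapply ozero_least; eauto.
    + subst. exfalso; eapply ozero_least; eauto.
  - right; split; auto.
Qed.

Lemma tadd_allb th (x : tm O) b : allb th (tadd_small x b) <-> allb th x /\ b <o th.
Proof.
  induction x as [|a _ c y IH]; simpl.
  - unfold emb. cdec (b = o0).
    + subst. rewrite allb_TZ. tauto.
    + rewrite allb_TP, !allb_TZ. tauto.
  - rewrite !allb_TP, IH. tauto.
Qed.

Lemma tadd_nf (x : tm O) b : nf (tadd_small x b) -> nf x.
Proof.
  induction x as [|a _ c y IH]; simpl; auto. intros [H1 [H2 [H3 H4]]].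
  repeat split; auto. destruct y; simpl in *; auto.
Qed.

Lemma tadd_nz (x : tm O) b : x <> TZ -> tadd_small x b <> TZ.
Proof. destruct x; simpl; congruence. Qed.

Lemma tadd_decomp (x z : tm O) b : nf z -> tlt z (tadd_small x b) -> ~ tlt z x ->
  exists g, g <o b /\ z = tadd_small x g.
Proof.
  revert z. induction x as [|a _ c y IH]; intros z Hz H1 H2; simpl in *.
  - unfold emb in H1. cdec (b = o0); [exfalso; eapply tlt_TZ_r; eauto|].
    destruct z as [|a' b' g'].
    + exists o0. split; [destruct (ole0 b); auto; congruence|]. simpl. unfold emb. cdec (@ozero W = o0); congruence.
    + simpl in H1. destruct H1 as [H|[-> [H|[-> H]]]]; [destruct a'; simpl in H; tauto| |destruct g'; simpl in H; tauto].
      exists b'. split; auto. simpl. unfold emb. cdec (b' = o0); [exfalso; apply Hz; auto|].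
      f_equal. destruct Hz as [_ [_ [_ Hbp]]]. destruct g'; auto. simpl in Hbp. destruct g'1; simpl in Hbp; tauto.
  - destruct z as [|a' b' g']; [exfalso; apply H2; simpl; auto|].
    simpl in H1. destruct H1 as [H|[-> [H|[-> H]]]]; [exfalso; apply H2; simpl; auto|exfalso; apply H2; simpl; auto|].
    destruct (IH g') as [gg [Hg E]]; auto. apply Hz. intro H3. apply H2. simpl. auto.
    exists gg. split; auto. simpl. congruence.
Qed.

Fixpoint allnz (x : tm O) : Prop :=
  match x with TZ => True | TP a _ g => a <> TZ /\ allnz g end.

Lemma one_plus_nz (e : tm O) : one_plus e <> TZ.
Proof.
  destruct e as [|a n g]; simpl; [discriminate|]. destruct a; [|discriminate].
  destruct g; [|discriminate]. cdec (ofinite n); discriminate.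
Qed.

Lemma tOmul_allnz (x : tm O) : allnz (tOmul x).
Proof. induction x; simpl; auto. split; auto. apply one_plus_nz. Qed.

Lemma tadd_succ (x z : tm O) b : allnz x -> nf z -> tadd_small x b = tsucc z ->
  exists b', is_succ_of b' b /\ z = tadd_small x b'.
Proof.
  revert z. induction x as [|a _ c y IH]; intros z Hx Hz E; simpl in *.
  - unfold emb in E. cdec (b = o0); [exfalso; symmetry in E; eapply tsucc_nz; eauto|].
    destruct z as [|a' b' g'].
    + simpl in E. injection E; intros. subst. exists o0. split; [apply osucc_spec|].
      simpl. unfold emb. cdec (@ozero W = o0); congruence.
    + destruct g' as [|a2 b2 g2].
      * simpl in E. cdec (a' = TZ).
        -- subst. injection E; intros; subst. exists b'. split; [apply osucc_spec|].
           simpl. unfold emb. cdec (b' = o0); [exfalso; apply Hz; auto|auto].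
        -- injection E; intros; subst. congruence.
      * simpl in E. injection E; intros H H0 H1. exfalso. exact (tsucc_nz (TP a2 b2 g2) (eq_sym H)).
  - destruct Hx as [Ha Hy]. destruct z as [|a' b' g'].
    + simpl in E. injection E; intros; subst; congruence.
    + destruct g' as [|a2 b2 g2].
      * simpl in E. cdec (a' = TZ).
        -- injection E; intros; subst; congruence.
        -- injection E; intros; subst. destruct (IH TZ) as [bb [H1 H2]]; auto. simpl; auto.
           exists bb. split; auto. simpl. congruence.
      * simpl in E. injection E; intros; subst. destruct (IH (TP a2 b2 g2)) as [bb [H1 H2]]; auto.
        apply Hz. exists bb. split; auto. simpl. congruence.
Qed.

Lemma fs_tadd (x : tm O) b t : b <> o0 -> exists d, fs (tadd_small x b) t = tadd_small x d.
Proof.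
  intro Hb. induction x as [|a _ c y IH]; simpl.
  - unfold emb. cdec (b = o0); [congruence|]. simpl.
    cdec (olimit b).
    + exists t. reflexivity.
    + cdec (opred b = o0).
      * cdec (@TZ O = TZ); [|congruence]. exists o0. simpl. unfold emb. cdec (@ozero W = o0); congruence.
      * cdec (@TZ O = TZ); [|congruence]. exists (opred b). simpl. unfold emb. cdec (opred b = o0); congruence.
  - destruct IH as [d Hd]. exists d. simpl.
    destruct (tadd_small y b) eqn:E; [exfalso; destruct y; simpl in E; [unfold emb in E; cdec (b = o0); congruence|congruence]|].
    congruence.
Qed.


Definition pwf (a : tm O) (t : O) : tm O :=
  if dec (a = TZ) then TZ
  else if dec (tsuccessor a) then mon (tpred a) t
  else TP (fs a t) oone TZ.

Lemma fs_last (a : tm O) b t : fs (TP a b TZ) t =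
  if dec (olimit b) then mon a t else if dec (opred b = o0) then pwf a t
  else TP a (opred b) (pwf a t).
Proof. reflexivity. Qed.

Lemma pw_cases (a : tm O) t : a <> TZ ->
  (tsuccessor a /\ pwf a t = mon (tpred a) t) \/ (~ tsuccessor a /\ pwf a t = TP (fs a t) oone TZ).
Proof. intro H. unfold pwf. cdec (a = TZ); [congruence|]. cdec (tsuccessor a); auto. Qed.

Lemma tpred_lt (a : tm O) : tsuccessor a -> tlt (tpred a) a.
Proof.
  intro H. destruct (tpred_spec a H) as [_ E].
  assert (forall p, a = tsucc p -> tlt p a) as K by (intros p ->; apply lt_tsucc). apply K, E.
Qed.

Lemma last_info (a : tm O) b : nf (TP a b TZ) -> tau (TP a b TZ) = tOmega ->
  nf a /\ b <> o0 /\ ~ olimit b /\ a <> TZ /\ is_succ_of (opred b) b /\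
  (tsuccessor a \/ (~ tsuccessor a /\ nf a /\ tau a = tOmega)).
Proof.
  intros Hn Ht. destruct (tau_last a b Hn Ht) as [Hl [Ha Hs]]. destruct Hn as [Hna [Hb _]].
  split; [auto|split;[auto|split;[auto|split;[auto|split]]]]. apply opred_spec; auto.
  destruct Hs as [Hs|[[_ Hs] Ht']]; auto.
Qed.

Lemma fs_lt (x : tm O) t : nf x -> tau x = tOmega -> tlt (fs x t) x.
Proof.
  induction x as [|a IHa b g IHg]; intros Hn Ht; [discriminate|].
  destruct g as [|a2 b2 g2].
  - destruct (last_info a b Hn Ht) as [Hna [Hb [Hl [Ha [Hp Hs]]]]].
    assert (tlt (pwf a t) (TP a b TZ)) as Hpw.
    { destruct (pw_cases a t Ha) as [[Hsa ->]|[Hsa ->]].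
      - unfold mon. cdec (t = o0); simpl; auto. left. apply tpred_lt; auto.
      - simpl. left. destruct Hs as [Hs|[_ [H1 H2]]]; [tauto|]. apply IHa; auto. }
    rewrite fs_last. cdec (olimit b); [contradiction|]. cdec (opred b = o0); auto.
    simpl. right; split; auto. left; apply Hp.
  - change (tlt (TP a b (fs (TP a2 b2 g2) t)) (TP a b (TP a2 b2 g2))).
    simpl. right; split; auto. right; split; auto. apply IHg; [apply Hn|exact Ht].
Qed.

Lemma fs_below (a g : tm O) t : nf g -> tau g = tOmega -> below_pow a g -> below_pow a (fs g t).
Proof.
  intros Hn Ht Hb. destruct g as [|a3 b3 g3]; [discriminate|]. simpl in Hb.
  destruct g3 as [|a4 b4 g4].
  - destruct (last_info a3 b3 Hn Ht) as [Hna [Hb3 [Hl [Ha [Hp Hs]]]]].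
    assert (below_pow a (pwf a3 t)) as Hpw.
    { destruct (pw_cases a3 t Ha) as [[Hsa ->]|[Hsa ->]].
      - unfold mon. cdec (t = o0); simpl; auto. eapply tlt_trans; [apply tpred_lt|]; eauto.
      - simpl. destruct Hs as [Hs|[_ [H1 H2]]]; [tauto|]. eapply tlt_trans; [apply fs_lt|]; eauto. }
    rewrite fs_last. cdec (olimit b3); [contradiction|]. cdec (opred b3 = o0); auto.
  - simpl. auto.
Qed.

Lemma fs_nf (x : tm O) t : nf x -> tau x = tOmega -> nf (fs x t).
Proof.
  induction x as [|a IHa b g IHg]; intros Hn Ht; [discriminate|].
  destruct g as [|a2 b2 g2].
  - destruct (last_info a b Hn Ht) as [Hna [Hb [Hl [Ha [Hp Hs]]]]].
    assert (nf (pwf a t) /\ below_pow a (pwf a t)) as [Hpw1 Hpw2].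
    { destruct (pw_cases a t Ha) as [[Hsa ->]|[Hsa ->]].
      - unfold mon. cdec (t = o0); simpl; auto. split; [|apply tpred_lt; auto].
        repeat split; auto. apply tpred_spec; auto.
      - destruct Hs as [Hs|[_ [H1 H2]]]; [tauto|]. simpl. split; [|apply fs_lt; auto].
        repeat split; auto. apply one_nz. }
    rewrite fs_last. cdec (olimit b); [contradiction|]. cdec (opred b = o0); auto.
    simpl. repeat split; auto.
  - change (nf (TP a b (fs (TP a2 b2 g2) t))).
    destruct Hn as [H1 [H2 [H3 H4]]]. split; [auto|split;[auto|split]].
    + apply IHg; auto.
    + apply (fs_below a (TP a2 b2 g2)); auto.
Qed.

Lemma fs_allb (x : tm O) t th : nf x -> tau x = tOmega -> allb th x -> t <o th -> allb th (fs x t).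
Proof.
  induction x as [|a IHa b g IHg]; intros Hn Ht Hal Hth; [discriminate|].
  destruct g as [|a2 b2 g2].
  - destruct (last_info a b Hn Ht) as [Hna [Hb [Hl [Ha [Hp Hs]]]]].
    apply allb_TP in Hal. destruct Hal as [Ha1 [Ha2 Ha3]].
    assert (allb th (pwf a t)) as Hpw.
    { destruct (pw_cases a t Ha) as [[Hsa ->]|[Hsa ->]].
      - unfold mon. cdec (t = o0); [apply allb_TZ; eapply allb_o0; eauto|].
        apply allb_TP. split; [|split; [apply allb_TZ; exact (allb_o0 _ _ Ha1)| auto]].
        apply allb_tsucc. destruct (tpred_spec a Hsa) as [_ Eq]. rewrite <- Eq. auto.
      - destruct Hs as [Hs|[_ [H1 H2]]]; [tauto|]. apply allb_TP. split; [apply IHa; auto|].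
        split; [apply allb_TZ; eapply allb_o0; eauto|]. exact (ole_lt _ _ _ (one_le b Hb) Ha3). }
    rewrite fs_last. cdec (olimit b); [contradiction|]. cdec (opred b = o0); auto.
    apply allb_TP. split; auto. split; auto. eapply lt_trans; [apply Hp|auto].
  - change (allb th (TP a b (fs (TP a2 b2 g2) t))).
    apply allb_TP in Hal. apply allb_TP. split; [tauto|]. split; [|tauto].
    apply IHg; auto; [apply Hn|tauto].
Qed.

Lemma fs_allb_t (x : tm O) t th : nf x -> tau x = tOmega -> allb th (fs x t) -> t <o th.
Proof.
  induction x as [|a IHa b g IHg]; intros Hn Ht Hal; [discriminate|].
  destruct g as [|a2 b2 g2].
  - destruct (last_info a b Hn Ht) as [Hna [Hb [Hl [Ha [Hp Hs]]]]].
    assert (allb th (pwf a t)) as Hpw.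
    { rewrite fs_last in Hal. cdec (olimit b); [contradiction|]. cdec (opred b = o0); auto.
      apply allb_TP in Hal; tauto. }
    destruct (pw_cases a t Ha) as [[Hsa E]|[Hsa E]]; rewrite E in Hpw.
    + unfold mon in Hpw. cdec (t = o0).
      * subst. eapply allb_o0; eauto.
      * apply allb_TP in Hpw; tauto.
    + destruct Hs as [Hs|[_ [H1 H2]]]; [tauto|]. apply allb_TP in Hpw. apply IHa; tauto.
  - change (allb th (TP a b (fs (TP a2 b2 g2) t))) in Hal.
    apply allb_TP in Hal. apply IHg; auto; [apply Hn|tauto].
Qed.

Lemma fs_cof (x : tm O) t : nf x -> tau x = tOmega ->
  forall z, nf z -> tlt z x -> allb t z -> tlt z (fs x t).
Proof.
  induction x as [|a IHa b g IHg]; intros Hn Ht z Hz Hzx Hzt; [discriminate|].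
  assert (t <> o0) as Ht0 by (eapply lt_nz, allb_o0; eauto).
  destruct g as [|a2 b2 g2].
  - destruct (last_info a b Hn Ht) as [Hna [Hb [Hl [Ha [Hp Hs]]]]].
    assert (forall z', nf z' -> below_pow a z' -> allb t z' -> tlt z' (pwf a t)) as Hpw.
    { intros z' Hz' Hb' Ht'.
      destruct (pw_cases a t Ha) as [[Hsa ->]|[Hsa ->]].
      - unfold mon. cdec (t = o0); [contradiction|].
        destruct z' as [|a3 b3 g3]; simpl; auto. simpl in Hb'.
        destruct (tpred_spec a Hsa) as [Hnp Eq]. rewrite Eq in Hb'.
        apply allb_TP in Ht'.
        destruct (tsucc_le a3 (tpred a) (proj1 Hz') Hb') as [->|h]; auto.
        right; split; auto. left; tauto.
      - destruct Hs as [Hs|[_ [H1 H2]]]; [tauto|].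
        destruct z' as [|a3 b3 g3]; simpl; auto. simpl in Hb'. left.
        apply allb_TP in Ht'. apply IHa; auto; [apply Hz'|tauto]. }
    rewrite fs_last. cdec (olimit b); [contradiction|].
    destruct z as [|a3 b3 g3].
    + cdec (opred b = o0); [apply Hpw; simpl; auto|simpl; auto].
    + simpl in Hzx. destruct Hzx as [H|[-> [H|[-> H]]]]; [| |exfalso; eapply tlt_TZ_r; eauto].
      * cdec (opred b = o0); [apply Hpw; simpl; auto|simpl; auto].
      * cdec (opred b = o0).
        -- exfalso. destruct (pred_le _ _ _ Hp H) as [h|h]; rewrite D0 in h.
           ++ eapply ozero_least; eauto.
           ++ apply Hz; auto.
        -- simpl. right; split; auto. destruct (pred_le _ _ _ Hp H) as [h|h]; auto.
           right; split; auto. apply allb_TP in Hzt. destruct Hz as [_ [_ [Hg3 Hbp3]]].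
           apply Hpw; auto; tauto.
  - change (tlt z (TP a b (fs (TP a2 b2 g2) t))).
    destruct z as [|a3 b3 g3]; simpl; auto. simpl in Hzx.
    destruct Hzx as [H|[-> [H|[-> H]]]]; auto.
    right; split; auto. right; split; auto. apply IHg; auto; [apply Hn|apply Hz|].
    apply allb_TP in Hzt; tauto.
Qed.


Lemma toO_emb (s : O) : toO (emb s) = s.
Proof. unfold emb. cdec (s = o0); simpl; auto. Qed.

Lemma emb_inj (x y : O) : emb x = emb y -> x = y.
Proof. intro H. rewrite <- (toO_emb x), <- (toO_emb y), H. auto. Qed.

Lemma ole_trans (x y z : O) : ole x y -> ole y z -> ole x z.
Proof. intros [H| ->] H2; auto. left. eapply lt_ole; eauto. Qed.

Lemma alpha_le (x : tm O) b : tlt x (tadd_small x b) \/ x = tadd_small x b.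
Proof.
  cdec (b = o0). { subst. rewrite tadd0. auto. }
  left. pattern x at 1. rewrite <- (tadd0 x). apply tadd_lt.
  destruct (ole0 b) as [h|h]; auto. congruence.
Qed.

End S.

Theorem lemma4p7 (W : Omega1) (X : W -> Prop) (Th : tm W -> W) :
  club X -> ~ X (ozero W) -> is_Theta X Th ->
  forall (alpha alphat : tm W) (beta : W),
    nf alphat -> alphat <> TZ -> alpha = tOmul alphat ->
    epshat Th (tadd_small alpha beta) -> JUMP Th (tadd_small alpha beta) ->
    tau alpha = @tOmega W ->
    (forall n, olt W (theta_seq Th alpha beta n) (theta_seq Th alpha beta (S n))) /\
    (forall n, ole (theta_seq Th alpha beta n) (Th (tadd_small alpha beta))) /\
    (forall y : W, (forall n, ole (theta_seq Th alpha beta n) y) ->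
       ole (Th (tadd_small alpha beta)) y).
Proof.
  intros Hclub HX0 HTh alpha alphat beta Hnat Hnz Ealpha Heps Hjump Htau.
  assert (Hnxi : nf (tadd_small alpha beta)) by apply Heps.
  assert (Hna : nf alpha) by (eapply tadd_nf; eauto).
  assert (Hanz : alpha <> TZ) by (intro E; rewrite E in Htau; discriminate).
  assert (Hallnz : allnz alpha) by (rewrite Ealpha; apply tOmul_allnz).
  set (xi := tadd_small alpha beta) in *.
  set (theta := theta_seq Th alpha beta).
  assert (HS : forall n, theta (S n) = Th (fs alpha (theta n))) by reflexivity.
  assert (Hc : forall z, nf z -> Theta_cond X Th z (Th z)) by (intros z Hz; apply (HTh z Hz)).
  assert (Hcase :
    (exists b', is_succ_of b' beta /\ nf (tadd_small alpha b') /\ tpred xi = tadd_small alpha b' /\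
                xi = tsucc (tpred xi) /\ theta 0 = Th (tadd_small alpha b'))
    \/ (FIX Th xi /\ beta <> ozero W /\ theta 0 = star xi)).
  { assert (tsuccessor xi -> exists b', is_succ_of b' beta /\ nf (tadd_small alpha b') /\
              tpred xi = tadd_small alpha b' /\ xi = tsucc (tpred xi) /\ theta 0 = Th (tadd_small alpha b')) as Hsuc.
    { intro Hs. destruct (tpred_spec xi Hs) as [Hnp Ep].
      destruct (tadd_succ alpha (tpred xi) beta Hallnz Hnp Ep) as [b' [Hb' Eb']].
      exists b'. split; auto. rewrite <- Eb'. split; auto. split; auto. split; auto.
      change (ThetaStar Th xi = Th (tpred xi)). unfold ThetaStar. cdec (tsuccessor xi); tauto. }
    destruct Hjump as [H|[H|H]].
    - exfalso. eapply tadd_nz; eauto.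
    - left; auto.
    - destruct (classic (tsuccessor xi)) as [Hs|Hs]; [left; auto|right].
      split; auto. split.
      + intro Eb. destruct H as [_ [_ [He _]]]. unfold xi in He. rewrite Eb, tadd0, Htau in He.
        eapply tOmega_ne_emb; eauto.
      + change (ThetaStar Th xi = star xi). unfold ThetaStar. cdec (tsuccessor xi); [tauto|].
        cdec (FIX Th xi); [|tauto]. destruct H as [_ [_ [He _]]]. rewrite <- He. apply toO_emb. }
  assert (Hxi_c := Hc xi Hnxi). destruct Hxi_c as [HXxi [Hsxi Hcxi]].
  assert (Hallxi : allb (Th xi) xi) by (apply star_allb; auto).
  assert (Hinc : forall n, olt W (theta n) (theta (S n))).
  { intro n. rewrite HS. assert (Hn := fs_nf alpha (theta n) Hna Htau).
    destruct (Hc _ Hn) as [_ [H _]]. apply star_allb in H. exact (fs_allb_t alpha (theta n) _ Hna Htau H). }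
  assert (Hlt : forall n, olt W (theta n) (Th xi)).
  { induction n.
    - destruct Hcase as [[b' [Hb' [Hnb [Ep [Exi E0]]]]]|[HF [Hb E0]]]; rewrite E0; auto.
      rewrite <- Ep. apply Hcxi.
      + rewrite Ep; auto.
      + pattern xi at 2. rewrite Exi. apply lt_tsucc.
      + apply star_allb. apply allb_tsucc. rewrite <- Exi. auto.
    - rewrite HS. apply Hcxi.
      + apply fs_nf; auto.
      + destruct (alpha_le alpha beta) as [h|h].
        * eapply tlt_trans; [apply fs_lt; auto|exact h].
        * unfold xi; rewrite <- h. apply fs_lt; auto.
      + apply star_allb. apply fs_allb; auto. apply tadd_allb in Hallxi. tauto. }
  split; [exact Hinc|]. split; [intro n; left; apply Hlt|].
  intros y Hy.
  destruct (exists_min (fun y => forall n, ole (theta n) y) (ex_intro _ y Hy)) as [lam [Hlam Hlmin]].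
  assert (Hlam_y : ole lam y) by (apply nlt_ole; intro H; exact (Hlmin y Hy H)).
  apply (fun H => ole_trans _ _ _ H Hlam_y).
  assert (Hltl : forall n, olt W (theta n) lam) by (intro n; exact (lt_ole _ _ _ (Hinc n) (Hlam (S n)))).
  assert (Hcof : forall z, olt W z lam -> exists n, olt W z (theta n)).
  { intros z Hz. apply NNPP; intro H. apply (Hlmin z); auto.
    intro n. apply nlt_ole. intro H2. apply H; eauto. }
  assert (HX : forall n, X (theta (S n))).
  { intro n. rewrite HS. apply Hc. apply fs_nf; auto. }
  assert (HXl : X lam).
  { apply (proj2 Hclub).
    - split; [exact (lt_nz _ _ (Hltl 0))|]. intros [p [Hp1 Hp2]].
      destruct (Hcof p Hp1) as [n Hn]. specialize (Hp2 _ Hn).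
      exact (lt_irr _ (lt_ole _ _ _ (Hltl n) Hp2)).
    - intros z Hz. destruct (Hcof z Hz) as [n Hn]. exists (theta (S n)).
      split; auto. split; [eapply lt_trans; eauto|auto]. }
  apply (proj2 (HTh xi Hnxi)). split; [exact HXl|split].
  - destruct Hcase as [[b' [Hb' [Hnb [Ep [Exi E0]]]]]|[HF [Hb E0]]]; [|rewrite <- E0; auto].
    destruct (Hc _ Hnb) as [_ [H _]]. rewrite <- E0 in H. apply star_allb in H.
    apply tadd_allb in H. destruct H as [H1 H2].
    apply star_allb, tadd_allb. split.
    + eapply allb_mono; [exact H1|left; auto].
    + exact (ole_lt _ _ _ (proj2 Hb' _ H2) (Hltl 0)).
  - intros z Hz Hzx Hzs.
    destruct (classic (tlt z alpha)) as [Hza|Hza].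
    + destruct (Hcof _ Hzs) as [m Hm].
      assert (Hzl := fs_cof alpha (theta m) Hna Htau z Hz Hza (proj1 (star_allb _ _) Hm)).
      destruct (Hc _ (fs_nf alpha (theta m) Hna Htau)) as [_ [_ H]].
      eapply lt_trans; [|exact (Hltl (S m))]. rewrite HS. apply H; auto.
      rewrite <- HS. eapply lt_trans; eauto.
    + destruct (tadd_decomp alpha z beta Hz Hzx Hza) as [g [Hg ->]].
      destruct Hcase as [[b' [Hb' [Hnb [Ep [Exi E0]]]]]|[HF [Hb E0]]].
      * destruct (pred_le _ _ _ Hb' Hg) as [h| ->]; [|rewrite <- E0; auto].
        eapply lt_trans; [|exact (Hltl 0)]. rewrite E0.
        destruct (Hc _ Hnb) as [_ [H1 H2]]. apply H2; auto.
        -- apply tadd_lt; auto.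
        -- apply star_allb in H1. apply tadd_allb in H1. apply star_allb, tadd_allb.
           split; [tauto|]. eapply lt_trans; [exact h|tauto].
      * destruct HF as [_ [Hs1 [He [gg [Hgg [Hxg Htg]]]]]].
        assert (Eg : star xi = Th gg) by (apply emb_inj; congruence).
        eapply lt_trans; [|exact (Hltl 0)]. rewrite E0, Eg. destruct (Hc _ Hgg) as [_ [_ H]]. apply H; auto.
        -- eapply tlt_trans; [apply tadd_lt; exact Hg|exact Hxg].
        -- rewrite <- Eg. apply star_allb, tadd_allb. split.
           ++ destruct (fs_tadd alpha beta oone Hb) as [d Hd]. fold xi in Hd. rewrite Hd in Hs1.
              apply star_allb, tadd_allb in Hs1. tauto.
           ++ apply NNPP; intro H2. apply nlt_ole in H2.
              assert (H3 : olt W (star xi) beta) by exact (ole_lt _ _ _ H2 Hg).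
              apply star_allb, tadd_allb in H3. exact (lt_irr _ (proj2 H3)).
Qed.
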